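(* For $\rho\in(0,1)$ and $\alpha\in\{1/2,1\}$, \[ \mathbf M(\Lambda;\rho,\rho,\alpha)=\rho(2-\rho)+(1-\rho)\Bigl[\rho\Lambda^2+\alpha(1-\rho)\bigl(Q_2(\Lambda)-2\Lambda Q_1(\Lambda)+\Lambda^2Q_0(\Lambda)\bigr)\Bigr], \] where, for $0\le x\le 2$, \[ Q_0(x)=\frac1\pi\int_x^2\sqrt{4-t^2}\,dt=1-\frac{x}{2\pi}\sqrt{4-x^2}-\frac2\pi\arctan\Bigl(\frac{x}{\sqrt{4-x^2}}\Bigr), \] \[ Q_1(x)=\frac1\pi\int_x^2t\sqrt{4-t^2}\,dt=\frac{1}{3\pi}(4-x^2)^{3/2}, \] \[ Q_2(x)=\frac1\pi\int_x^2t^2\sqrt{4-t^2}\,dt=1-\frac{1}{4\pi}x\sqrt{4-x^2}(x^2-2)-\frac2\pi\arcsin\Bigl(\frac x2\Bigr). \] Moreover, the minimizer over $\Lambda$ of $\mathbf M(\Lambda;\rho,\rho,\alpha)$ equals $2\sin(\theta_\alpha(\rho))$, where $\theta_\alpha(\rho)\in[0,\pi/2]$ is the unique solution of \[ \theta+\cot(\theta)\Bigl(1-\tfrac13\cos^2\theta\Bigr)=\frac{\pi(1+\alpha^{-1}\rho-\rho)}{2(1-\rho)}, \] and the left-hand side of this equation is a decreasing function of $\theta$.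
   Context: For $\gamma>0$, $\gamma_\pm=(1\pm\sqrt\gamma)^2$, the Marčenko–Pastur density is $p_\gamma(t)=\frac{1}{2\pi\gamma t}\sqrt{(\gamma_+-t)(t-\gamma_-)}\mathbf 1_{[\gamma_-,\gamma_+]}(t)$ and $P_\gamma(x;k)=\int_x^{\gamma_+}t^kp_\gamma(t)\,dt$. For $\alpha\in\{1/2,1\}$, \[ \mathbf M(\Lambda;\rho,\tilde\rho,\alpha)=\rho+\tilde\rho-\rho\tilde\rho+(1-\tilde\rho)\Bigl[\rho\Lambda^2+\alpha(1-\rho)\bigl(P_\gamma(\Lambda^2;1)-2\Lambda P_\gamma(\Lambda^2;\tfrac12)+\Lambda^2P_\gamma(\Lambda^2;0)\bigr)\Bigr], \] with $\gamma=(\tilde\rho-\rho\tilde\rho)/(\rho-\rho\tilde\rho)$; here $\tilde\rho=\rho$ (square case), so $\gamma=1$. *)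

(* Defs.v *)
From Stdlib Require Import Reals Lra.
From Coquelicot Require Import Coquelicot.
Open Scope R_scope.

Definition gamma_plus (g : R) : R := (1 + sqrt g) ^ 2.
Definition gamma_minus (g : R) : R := (1 - sqrt g) ^ 2.

Definition mp_density (g t : R) : R :=
  if Rle_dec (gamma_minus g) t then
    if Rle_dec t (gamma_plus g) then
      / (2 * PI * g * t) * sqrt ((gamma_plus g - t) * (t - gamma_minus g))
    else 0
  else 0.

(* P_gamma(x;k) = int_x^{gamma_+} t^k p_gamma(t) dt, as an (improper at the
   lower endpoint) Riemann integral; t^k = Rpower t k (only t > x >= 0 matter). *)
Definition P_gamma (g x k : R) : R :=
  RInt_gen (fun t => Rpower t k * mp_density g t) (at_right x) (at_point (gamma_plus g)).

Definition gamma_of (rho rt : R) : R := (rt - rho * rt) / (rho - rho * rt).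

Definition M (L rho rt alpha : R) : R :=
  let g := gamma_of rho rt in
  rho + rt - rho * rt +
  (1 - rt) * (rho * L ^ 2 +
     alpha * (1 - rho) * (P_gamma g (L ^ 2) 1 - 2 * L * P_gamma g (L ^ 2) (1 / 2)
                          + L ^ 2 * P_gamma g (L ^ 2) 0)).

Definition Q0 (x : R) : R := / PI * RInt (fun t => sqrt (4 - t ^ 2)) x 2.
Definition Q1 (x : R) : R := / PI * RInt (fun t => t * sqrt (4 - t ^ 2)) x 2.
Definition Q2 (x : R) : R := / PI * RInt (fun t => t ^ 2 * sqrt (4 - t ^ 2)) x 2.

Definition theta_lhs (th : R) : R := th + cos th / sin th * (1 - / 3 * (cos th) ^ 2).

(* Main.v *)
Require Import Defs.
From Stdlib Require Import Reals Lra.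
From Coquelicot Require Import Coquelicot.
Open Scope R_scope.

Lemma sub_2sin (f : R -> R) (u : R) :
  (forall t, continuous f t) ->
  RInt f (2 * sin u) 2 = RInt (fun v => 2 * cos v * f (2 * sin v)) u (PI/2).
Proof.
  intros Hf.
  replace 2 with (2 * sin (PI/2)) at 2 by (rewrite sin_PI2; ring).
  symmetry.
  apply (RInt_comp f (fun v => 2 * sin v) (fun v => 2 * cos v)).
  - intros; apply Hf.
  - intros x _; split.
    + auto_derive; auto; ring.
    + apply (ex_derive_continuous (fun v => 2 * cos v)). auto_derive; auto.
Qed.

Definition A0 (v : R) := 2 * v + 2 * sin v * cos v.
Definition A1 (v : R) := - (8 / 3) * cos v ^ 3.
Definition A2 (v : R) := 2 * v - 2 * sin v * cos v * (cos v ^ 2 - sin v ^ 2).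

Lemma dA0 x : is_derive A0 x (4 * cos x ^ 2).
Proof. unfold A0. auto_derive; auto. pose proof (sin2_cos2 x). unfold Rsqr in *. nra. Qed.
Lemma dA1 x : is_derive A1 x (2 * sin x * (4 * cos x ^ 2)).
Proof. unfold A1. auto_derive; auto. field. Qed.
Lemma dA2 x : is_derive A2 x ((2 * sin x)^2 * (4 * cos x ^ 2)).
Proof. unfold A2. auto_derive; auto. pose proof (sin2_cos2 x). unfold Rsqr in *. nra. Qed.

Lemma RInt_via (f dA A : R -> R) u : 0 <= u <= PI/2 ->
  (forall t, continuous f t) -> (forall v, is_derive A v (dA v)) ->
  (forall v, continuous dA v) ->
  (forall v, 0 < v < PI/2 -> 2 * cos v * f (2 * sin v) = dA v) ->
  RInt f (2 * sin u) 2 = A (PI/2) - A u.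
Proof.
  intros Hu Hf HA HdA Heq.
  rewrite sub_2sin by exact Hf.
  apply is_RInt_unique.
  apply is_RInt_ext with dA.
  { intros x Hx. rewrite Rmin_left in Hx by lra. rewrite Rmax_right in Hx by lra.
    symmetry; apply Heq; lra. }
  apply (is_RInt_derive A dA); intros; auto.
Qed.

Lemma sqrt_c v : 0 <= cos v -> sqrt (4 - (2 * sin v) ^ 2) = 2 * cos v.
Proof.
  intros H. rewrite <- (sqrt_pow2 (2 * cos v)) by lra. f_equal.
  pose proof (sin2_cos2 v). unfold Rsqr in *. nra.
Qed.

Lemma cont_sq : forall t, continuous (fun t => sqrt (4 - t ^ 2)) t.
Proof.
  intros t. apply (continuous_comp (fun t => 4 - t^2) sqrt).
  - apply (ex_derive_continuous (fun t => 4 - t^2)). auto_derive; auto.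
  - apply continuous_sqrt.
Qed.

Lemma cos_pos_open v : 0 < v < PI/2 -> 0 < cos v.
Proof. intros. apply cos_gt_0; lra. Qed.

Lemma cont_dA0 v : continuous (fun x => 4 * cos x ^ 2) v.
Proof. apply (ex_derive_continuous (fun x => 4 * cos x ^ 2)). auto_derive; auto. Qed.
Lemma cont_dA1 v : continuous (fun x => 2 * sin x * (4 * cos x ^ 2)) v.
Proof. apply (ex_derive_continuous (fun x => 2 * sin x * (4 * cos x ^ 2))). auto_derive; auto. Qed.
Lemma cont_dA2 v : continuous (fun x => (2 * sin x)^2 * (4 * cos x ^ 2)) v.
Proof. apply (ex_derive_continuous (fun x => (2 * sin x)^2 * (4 * cos x ^ 2))). auto_derive; auto. Qed.

Lemma Q0_u u : 0 <= u <= PI/2 -> Q0 (2 * sin u) = / PI * (A0 (PI/2) - A0 u).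
Proof.
  intros Hu. unfold Q0. f_equal.
  apply RInt_via with (dA := fun x => 4 * cos x ^ 2); auto.
  - exact cont_sq.
  - exact dA0.
  - exact cont_dA0.
  - intros v Hv. rewrite sqrt_c by (pose proof (cos_pos_open v Hv); lra). ring.
Qed.

Lemma Q1_u u : 0 <= u <= PI/2 -> Q1 (2 * sin u) = / PI * (A1 (PI/2) - A1 u).
Proof.
  intros Hu. unfold Q1. f_equal.
  apply RInt_via with (dA := fun x => 2 * sin x * (4 * cos x ^ 2)); auto.
  - intros t. apply (continuous_mult (fun t => t) (fun t => sqrt (4 - t^2))).
    apply continuous_id. apply cont_sq.
  - exact dA1.
  - exact cont_dA1.
  - intros v Hv. rewrite sqrt_c by (pose proof (cos_pos_open v Hv); lra). ring.
Qed.

Lemma Q2_u u : 0 <= u <= PI/2 -> Q2 (2 * sin u) = / PI * (A2 (PI/2) - A2 u).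
Proof.
  intros Hu. unfold Q2. f_equal.
  apply RInt_via with (dA := fun x => (2 * sin x)^2 * (4 * cos x ^ 2)); auto.
  - intros t. apply (continuous_mult (fun t => t^2) (fun t => sqrt (4 - t^2))).
    apply (ex_derive_continuous (fun t => t^2)). auto_derive; auto. apply cont_sq.
  - exact dA2.
  - exact cont_dA2.
  - intros v Hv. rewrite sqrt_c by (pose proof (cos_pos_open v Hv); lra). ring.
Qed.

Lemma asin_half x : 0 <= x <= 2 ->
  0 <= asin (x/2) <= PI/2 /\ 2 * sin (asin (x/2)) = x /\ sqrt (4 - x^2) = 2 * cos (asin (x/2)).
Proof.
  intros Hx.
  assert (Hs : sin (asin (x/2)) = x/2) by (apply sin_asin; lra).
  pose proof (asin_bound (x/2)) as Hb.
  assert (H0 : 0 <= asin (x/2)).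
  { destruct (Rle_or_lt 0 (asin (x/2))) as [h|h]; auto.
    assert (sin (asin (x/2)) < 0) by (apply sin_lt_0_var; lra). lra. }
  assert (Hc : 0 <= cos (asin (x/2))) by (apply cos_ge_0; lra).
  split; [lra|]. split; [lra|].
  rewrite <- sqrt_c by exact Hc. f_equal. rewrite Hs. field.
Qed.

Lemma Q0_closed x : 0 <= x < 2 ->
  Q0 x = 1 - x / (2 * PI) * sqrt (4 - x ^ 2) - 2 / PI * atan (x / sqrt (4 - x ^ 2)).
Proof.
  intros Hx. destruct (asin_half x) as [Hu [Hs Hc]]; [lra|].
  set (u := asin (x/2)) in *.
  assert (Hu2 : u < PI/2).
  { destruct Hu as [_ [h|h]]; auto. rewrite h, sin_PI2 in Hs. lra. }
  assert (Hcp : 0 < cos u) by (apply cos_gt_0; lra).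
  rewrite Hc. rewrite <- Hs at 1 3. rewrite Q0_u by lra.
  replace (2 * sin u / (2 * cos u)) with (tan u) by (unfold tan; field; lra).
  rewrite atan_tan by lra.
  rewrite <- Hs. unfold A0. rewrite sin_PI2, cos_PI2. pose proof PI_RGT_0. field. lra.
Qed.

Lemma Q1_closed x : 0 <= x <= 2 ->
  Q1 x = / (3 * PI) * ((4 - x ^ 2) * sqrt (4 - x ^ 2)).
Proof.
  intros Hx. destruct (asin_half x) as [Hu [Hs Hc]]; [lra|].
  set (u := asin (x/2)) in *.
  rewrite Hc. rewrite <- Hs at 1 2. rewrite Q1_u by lra.
  unfold A1. rewrite cos_PI2. pose proof PI_RGT_0. pose proof (sin2_cos2 u). unfold Rsqr in *.
  replace (4 - (2 * sin u) ^ 2) with (4 * cos u ^ 2) by nra. field. lra.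
Qed.

Lemma Q2_closed x : 0 <= x <= 2 ->
  Q2 x = 1 - / (4 * PI) * x * sqrt (4 - x ^ 2) * (x ^ 2 - 2) - 2 / PI * asin (x / 2).
Proof.
  intros Hx. destruct (asin_half x) as [Hu [Hs Hc]]; [lra|].
  set (u := asin (x/2)) in *.
  rewrite Hc. rewrite <- Hs at 1 2 3. rewrite Q2_u by lra.
  unfold A2. rewrite cos_PI2, sin_PI2. pose proof PI_RGT_0. pose proof (sin2_cos2 u). unfold Rsqr in *.
  replace (cos u ^ 2 - sin u ^ 2) with (1 - 2 * sin u ^ 2) by nra. field. lra.
Qed.

Lemma gen_right (f Psi : R -> R) x b d : 0 < d ->
  (forall y, x < y < x + d -> is_RInt f y b (Psi y)) ->
  continuous Psi x ->
  RInt_gen f (at_right x) (at_point b) = Psi x.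
Proof.
  intros Hd Hi Hc.
  apply is_RInt_gen_unique.
  intros P HP.
  assert (HP' := Hc P HP).
  destruct HP' as [e He].
  exists (fun y => x < y < x + Rmin d e) (fun z => z = b).
  - exists (mkposreal _ (Rmin_pos _ _ Hd (cond_pos e))).
    intros y Hy Hxy. split; auto.
    unfold ball in Hy; simpl in Hy; unfold AbsRing_ball, abs, minus, plus, opp in Hy; simpl in Hy.
    apply Rabs_def2 in Hy. lra.
  - reflexivity.
  - intros y z Hy Hz. simpl. exists (Psi y). split.
    + subst z. apply Hi. pose proof (Rmin_l d e). lra.
    + apply He. unfold ball; simpl; unfold AbsRing_ball, abs, minus, plus, opp; simpl.
      pose proof (Rmin_r d e). apply Rabs_def1; lra.
Qed.

Lemma sub_4sin2 (f : R -> R) (u : R) : 0 < u <= PI/2 ->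
  (forall t, 0 < t -> continuous f t) ->
  RInt f ((2 * sin u)^2) 4 = RInt (fun v => 8 * sin v * cos v * f ((2 * sin v)^2)) u (PI/2).
Proof.
  intros Hu Hf.
  replace 4 with ((2 * sin (PI/2))^2) at 1 by (rewrite sin_PI2; ring).
  symmetry.
  apply (RInt_comp f (fun v => (2 * sin v)^2) (fun v => 8 * sin v * cos v)).
  - intros x Hx. rewrite Rmin_left in Hx by lra. rewrite Rmax_right in Hx by lra.
    apply Hf. assert (0 < sin x) by (apply sin_gt_0; pose proof PI_RGT_0; lra). nra.
  - intros x _; split.
    + auto_derive; auto. ring.
    + apply (ex_derive_continuous (fun v => 8 * sin v * cos v)). auto_derive; auto.
Qed.

Lemma RInt_via4 (f dA A : R -> R) u : 0 < u <= PI/2 ->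
  (forall t, 0 < t -> continuous f t) -> (forall v, is_derive A v (dA v)) ->
  (forall v, continuous dA v) ->
  (forall v, 0 < v < PI/2 -> 8 * sin v * cos v * f ((2 * sin v)^2) = / PI * dA v) ->
  is_RInt f ((2 * sin u)^2) 4 (/ PI * (A (PI/2) - A u)).
Proof.
  intros Hu Hf HA HdA Heq.
  assert (Hpos : 0 < (2 * sin u)^2).
  { assert (0 < sin u) by (apply sin_gt_0; pose proof PI_RGT_0; lra). nra. }
  assert (Hle : (2 * sin u)^2 <= 4).
  { pose proof (SIN_bound u). pose proof (sin_ge_0 u). nra. }
  replace (/ PI * (A (PI/2) - A u)) with (RInt f ((2 * sin u)^2) 4).
  { apply (RInt_correct (V := R_CompleteNormedModule) f). apply (ex_RInt_continuous (V := R_CompleteNormedModule)). intros z Hz.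
    rewrite Rmin_left in Hz by lra. apply Hf. lra. }
  rewrite sub_4sin2 by auto.
  apply is_RInt_unique.
  apply is_RInt_ext with (fun v => scal (/ PI) (dA v)).
  { intros x Hx. rewrite Rmin_left in Hx by lra. rewrite Rmax_right in Hx by lra.
    symmetry; apply Heq; lra. }
  apply (is_RInt_scal dA u (PI/2) (/PI) (A (PI/2) - A u)).
  apply (is_RInt_derive A dA); intros; auto.
Qed.

Lemma gp1 : gamma_plus 1 = 4.
Proof. unfold gamma_plus. rewrite sqrt_1. ring. Qed.
Lemma gm1 : gamma_minus 1 = 0.
Proof. unfold gamma_minus. rewrite sqrt_1. ring. Qed.

Definition ft0 (t : R) := / (2 * PI * t) * sqrt ((4 - t) * t).

Lemma mp1_in t : 0 <= t <= 4 -> mp_density 1 t = ft0 t.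
Proof.
  intros Ht. unfold mp_density, ft0. rewrite gp1, gm1.
  destruct (Rle_dec 0 t); [|lra]. destruct (Rle_dec t 4); [|lra].
  f_equal. f_equal. ring. f_equal. ring.
Qed.

Lemma mp1_out t : 4 < t -> mp_density 1 t = 0.
Proof.
  intros Ht. unfold mp_density. rewrite gp1, gm1.
  destruct (Rle_dec 0 t); [|lra]. destruct (Rle_dec t 4); [lra|]. auto.
Qed.

Lemma cont_ft0 t : 0 < t -> continuous ft0 t.
Proof.
  intros Ht. unfold ft0.
  apply (continuous_mult (fun t => / (2 * PI * t)) (fun t => sqrt ((4 - t) * t))).
  - apply (ex_derive_continuous (fun t => / (2 * PI * t))). auto_derive.
    pose proof PI_RGT_0. nra.
  - apply (continuous_comp (fun t => (4 - t) * t) sqrt).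
    + apply (ex_derive_continuous (fun t => (4 - t) * t)). auto_derive; auto.
    + apply continuous_sqrt.
Qed.

Lemma sq_t v : 0 < sin v -> 0 < cos v ->
  sqrt ((4 - (2 * sin v)^2) * (2 * sin v)^2) = 4 * sin v * cos v.
Proof.
  intros Hs Hc. rewrite <- (sqrt_pow2 (4 * sin v * cos v)) by nra. f_equal.
  pose proof (sin2_cos2 v). unfold Rsqr in *. nra.
Qed.

Lemma ft0_sub v : 0 < v < PI/2 -> 8 * sin v * cos v * ft0 ((2 * sin v)^2) = / PI * (4 * cos v ^ 2).
Proof.
  intros Hv. assert (Hs : 0 < sin v) by (apply sin_gt_0; lra).
  assert (Hc : 0 < cos v) by (apply cos_gt_0; lra).
  unfold ft0. rewrite sq_t by auto. pose proof PI_RGT_0. field. split; lra.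
Qed.

Lemma P_gen (k : R) (fk A dA : R -> R) x :
  (forall t, 0 < t <= 4 -> Rpower t k * mp_density 1 t = fk t) ->
  (forall t, 0 < t -> continuous fk t) -> (forall v, is_derive A v (dA v)) ->
  (forall v, continuous dA v) ->
  (forall v, 0 < v < PI/2 -> 8 * sin v * cos v * fk ((2 * sin v)^2) = / PI * dA v) ->
  0 <= x < 4 -> P_gamma 1 x k = / PI * (A (PI/2) - A (asin (sqrt x / 2))).
Proof.
  intros Hk Hf HA HdA Heq Hx.
  unfold P_gamma. rewrite gp1.
  apply gen_right with (d := 4 - x) (Psi := fun y => / PI * (A (PI/2) - A (asin (sqrt y / 2)))).
  - lra.
  - intros y Hy.
    assert (Hsy : 0 < sqrt y) by (apply sqrt_lt_R0; lra).
    assert (Hsy2 : sqrt y <= 2).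
    { rewrite <- (sqrt_pow2 2) by lra. apply sqrt_le_1_alt. lra. }
    destruct (asin_half (sqrt y)) as [Hu [Hs _]]; [lra|].
    set (u := asin (sqrt y / 2)) in *.
    assert (Hu0 : 0 < u).
    { destruct Hu as [[h|h] _]; auto. rewrite <- h, sin_0 in Hs. lra. }
    assert (Hy2 : (2 * sin u) ^ 2 = y) by (rewrite Hs; apply pow2_sqrt; lra).
    apply is_RInt_ext with fk.
    { intros t Ht. rewrite Rmin_left in Ht by lra. rewrite Rmax_right in Ht by lra.
      symmetry; apply Hk; lra. }
    rewrite <- Hy2. apply RInt_via4 with (dA := dA); auto. lra.
  - apply (continuous_comp (fun y => asin (sqrt y / 2)) (fun w => / PI * (A (PI/2) - A w))).
    + apply (continuous_comp (fun y => sqrt y / 2) asin).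
      * apply (continuous_mult sqrt (fun _ => / 2)). apply continuous_sqrt. apply continuous_const.
      * apply continuity_pt_filterlim. apply derivable_continuous_pt. apply derivable_pt_asin.
        assert (0 <= sqrt x) by apply sqrt_pos.
        assert (sqrt x < 2).
        { rewrite <- (sqrt_pow2 2) by lra. apply sqrt_lt_1_alt. lra. }
        lra.
    + apply (continuous_mult (fun _ => / PI) (fun w => A (PI/2) - A w)). apply continuous_const.
      apply (continuous_minus (fun _ => A (PI/2)) A). apply continuous_const.
      apply (ex_derive_continuous A). eexists; apply HA.
Qed.

Lemma P_zero k x : 4 <= x -> P_gamma 1 x k = 0.
Proof.
  intros Hx. unfold P_gamma. rewrite gp1.
  apply gen_right with (d := 1) (Psi := fun _ => 0).
  - lra.
  - intros y Hy.
    apply is_RInt_ext with (fun _ => 0).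
    { intros t Ht. rewrite Rmin_right in Ht by lra. rewrite Rmax_left in Ht by lra.
      rewrite mp1_out by lra. now rewrite Rmult_0_r. }
    pose proof (is_RInt_const (V:=R_NormedModule) y 4 0) as H. replace (@scal R_Ring (NormedModule.ModuleSpace R_AbsRing R_NormedModule) (4 - y) 0) with 0 in H. exact H. change (0 = (4 - y) * 0). ring.
  - apply continuous_const.
Qed.

Definition Ij (A : R -> R) (u : R) := / PI * (A (PI/2) - A u).

Lemma P0_val x : 0 <= x < 4 -> P_gamma 1 x 0 = Ij A0 (asin (sqrt x / 2)).
Proof.
  intros Hx. apply P_gen with (fk := ft0) (dA := fun x => 4 * cos x ^ 2); auto.
  - intros t Ht. rewrite Rpower_O by lra. rewrite mp1_in by lra. ring.
  - exact cont_ft0.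
  - exact dA0.
  - exact cont_dA0.
  - exact ft0_sub.
Qed.

Lemma P1_val x : 0 <= x < 4 -> P_gamma 1 x (1/2) = Ij A1 (asin (sqrt x / 2)).
Proof.
  intros Hx. apply P_gen with (fk := fun t => sqrt t * ft0 t)
     (dA := fun x => 2 * sin x * (4 * cos x ^ 2)); auto.
  - intros t Ht. replace (1/2) with (/2) by field. rewrite Rpower_sqrt by lra.
    rewrite mp1_in by lra. ring.
  - intros t Ht. apply (continuous_mult sqrt ft0). apply continuous_sqrt. apply cont_ft0; auto.
  - exact dA1.
  - exact cont_dA1.
  - intros v Hv. assert (Hs : 0 < sin v) by (apply sin_gt_0; lra).
    rewrite sqrt_pow2 by lra.
    transitivity (2 * sin v * (8 * sin v * cos v * ft0 ((2 * sin v) ^ 2))); [ring|].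
    rewrite ft0_sub by auto. ring.
Qed.

Lemma P2_val x : 0 <= x < 4 -> P_gamma 1 x 1 = Ij A2 (asin (sqrt x / 2)).
Proof.
  intros Hx. apply P_gen with (fk := fun t => t * ft0 t)
     (dA := fun x => (2 * sin x) ^ 2 * (4 * cos x ^ 2)); auto.
  - intros t Ht. rewrite Rpower_1 by lra.
    rewrite mp1_in by lra. ring.
  - intros t Ht. apply (continuous_mult (fun t => t) ft0). apply continuous_id. apply cont_ft0; auto.
  - exact dA2.
  - exact cont_dA2.
  - intros v Hv.
    transitivity ((2 * sin v) ^ 2 * (8 * sin v * cos v * ft0 ((2 * sin v) ^ 2))); [ring|].
    rewrite ft0_sub by auto. ring.
Qed.

Lemma Ij_PI2 A : Ij A (PI/2) = 0.
Proof. unfold Ij. ring. Qed.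

Lemma L_cases L : 0 <= L <= 2 ->
  (L < 2 /\ 0 <= L^2 < 4 /\ asin (sqrt (L^2) / 2) = asin (L/2)) \/ (L = 2 /\ 4 <= L^2 /\ asin (L/2) = PI/2).
Proof.
  intros HL. destruct (Rlt_or_le L 2).
  - left. split; auto. split. nra. rewrite sqrt_pow2 by lra. auto.
  - right. assert (L = 2) by lra. subst. split; auto. split. lra.
    replace (2/2) with 1 by field. apply asin_1.
Qed.

Lemma P_Q0 L : 0 <= L <= 2 -> P_gamma 1 (L^2) 0 = Q0 L.
Proof.
  intros HL. destruct (asin_half L HL) as [Hu [Hs _]].
  rewrite <- Hs at 2. rewrite Q0_u by auto. fold (Ij A0 (asin (L/2))).
  destruct (L_cases L HL) as [[_ [H1 H2]]|[_ [H1 H2]]].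
  - rewrite P0_val by auto. rewrite H2. auto.
  - rewrite P_zero by auto. rewrite H2, Ij_PI2. auto.
Qed.

Lemma P_Q1 L : 0 <= L <= 2 -> P_gamma 1 (L^2) (1/2) = Q1 L.
Proof.
  intros HL. destruct (asin_half L HL) as [Hu [Hs _]].
  rewrite <- Hs at 2. rewrite Q1_u by auto. fold (Ij A1 (asin (L/2))).
  destruct (L_cases L HL) as [[_ [H1 H2]]|[_ [H1 H2]]].
  - rewrite P1_val by auto. rewrite H2. auto.
  - rewrite P_zero by auto. rewrite H2, Ij_PI2. auto.
Qed.

Lemma P_Q2 L : 0 <= L <= 2 -> P_gamma 1 (L^2) 1 = Q2 L.
Proof.
  intros HL. destruct (asin_half L HL) as [Hu [Hs _]].
  rewrite <- Hs at 2. rewrite Q2_u by auto. fold (Ij A2 (asin (L/2))).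
  destruct (L_cases L HL) as [[_ [H1 H2]]|[_ [H1 H2]]].
  - rewrite P2_val by auto. rewrite H2. auto.
  - rewrite P_zero by auto. rewrite H2, Ij_PI2. auto.
Qed.

Lemma gamma_rr rho : 0 < rho < 1 -> gamma_of rho rho = 1.
Proof. intros. unfold gamma_of. field. nra. Qed.

Lemma M_formula rho alpha L : 0 < rho < 1 -> 0 <= L <= 2 ->
  M L rho rho alpha =
  rho * (2 - rho) + (1 - rho) * (rho * L ^ 2 +
     alpha * (1 - rho) * (Q2 L - 2 * L * Q1 L + L ^ 2 * Q0 L)).
Proof.
  intros Hr HL. unfold M. cbv zeta. rewrite gamma_rr by auto.
  rewrite P_Q0, P_Q1, P_Q2 by auto. ring.
Qed.

Lemma M_big rho alpha L : 0 < rho < 1 -> 2 <= L ->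
  M L rho rho alpha = rho * (2 - rho) + (1 - rho) * (rho * L ^ 2).
Proof.
  intros Hr HL. unfold M. cbv zeta. rewrite gamma_rr by auto.
  rewrite !P_zero by nra. ring.
Qed.

Lemma dIj (A dA : R -> R) u : (forall v, is_derive A v (dA v)) ->
  is_derive (Ij A) u (- / PI * dA u).
Proof.
  intros HA. unfold Ij.
  assert (E : Derive A u = dA u) by (apply is_derive_unique; auto).
  auto_derive.
  - exists (dA u); auto.
  - change (Derive (fun x => A x) u) with (Derive A u). rewrite E. ring.
Qed.

Definition Fm (rho alpha u : R) :=
  rho * (2 * sin u) ^ 2 + alpha * (1 - rho) *
    (Ij A2 u - 2 * (2 * sin u) * Ij A1 u + (2 * sin u) ^ 2 * Ij A0 u).

Definition hfun (rho alpha u : R) :=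
  2 * rho * sin u + alpha * (1 - rho) * (2 * sin u * Ij A0 u - Ij A1 u).

Lemma dFm rho alpha u : is_derive (Fm rho alpha) u (4 * cos u * hfun rho alpha u).
Proof.
  unfold Fm, hfun.
  assert (E0 : Derive (Ij A0) u = - / PI * (4 * cos u ^ 2)) by (apply is_derive_unique, (dIj A0 (fun x => 4 * cos x ^ 2)), dA0).
  assert (E1 : Derive (Ij A1) u = - / PI * (2 * sin u * (4 * cos u ^ 2))) by (apply is_derive_unique, (dIj A1 (fun x => 2 * sin x * (4 * cos x ^ 2))), dA1).
  assert (E2 : Derive (Ij A2) u = - / PI * ((2 * sin u) ^ 2 * (4 * cos u ^ 2))) by (apply is_derive_unique, (dIj A2 (fun x => (2 * sin x) ^ 2 * (4 * cos x ^ 2))), dA2).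
  auto_derive.
  - repeat split; eexists; [apply (dIj A2 _ u dA2) | apply (dIj A1 _ u dA1) | apply (dIj A0 _ u dA0)].
  - change (Derive (fun x => Ij A0 x) u) with (Derive (Ij A0) u).
    change (Derive (fun x => Ij A1 x) u) with (Derive (Ij A1) u).
    change (Derive (fun x => Ij A2 x) u) with (Derive (Ij A2) u).
    rewrite E0, E1, E2. ring.
Qed.

Definition Kf (u : R) := u * sin u + cos u - / 3 * cos u ^ 3.

Lemma h_K rho alpha u : hfun rho alpha u =
  2 * (rho + alpha * (1 - rho)) * sin u - 4 * alpha * (1 - rho) / PI * Kf u.
Proof.
  unfold hfun, Kf, Ij, A0, A1. rewrite sin_PI2, cos_PI2.
  pose proof PI_RGT_0.
  assert (Hid : 2 * sin u * (/ PI * (2 * (PI / 2) + 2 * 1 * 0 - (2 * u + 2 * sin u * cos u))) -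
   / PI * (- (8 / 3) * 0 ^ 3 - - (8 / 3) * cos u ^ 3)
   - (2 * sin u - 4 / PI * (u * sin u + cos u - / 3 * cos u ^ 3))
   = 4 * cos u * (1 - sin u ^ 2 - cos u ^ 2) / PI) by (field; lra).
  assert (sin u ^ 2 + cos u ^ 2 = 1) by (pose proof (sin2_cos2 u); unfold Rsqr in *; nra).
  replace (1 - sin u ^ 2 - cos u ^ 2) with 0 in Hid by lra.
  assert (Hz : 4 * cos u * 0 / PI = 0) by (field; lra). rewrite Hz in Hid.
  match goal with |- ?a = ?b => apply Rminus_diag_uniq; transitivity (alpha * (1 - rho) * (4 * cos u * (1 - sin u ^ 2 - cos u ^ 2) / PI)) end.
  - field. lra.
  - replace (1 - sin u ^ 2 - cos u ^ 2) with 0 by lra. field. lra.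
Qed.

Lemma K_T u : sin u <> 0 -> Kf u = sin u * theta_lhs u.
Proof. intros. unfold Kf, theta_lhs. field. auto. Qed.

Lemma dT u : sin u <> 0 -> is_derive theta_lhs u (- (2/3) * cos u ^ 4 / sin u ^ 2).
Proof.
  intros H. unfold theta_lhs. auto_derive. auto.
  assert (Hid : sin u ^ 2 + cos u ^ 2 = 1) by (pose proof (sin2_cos2 u); unfold Rsqr in *; nra).
  transitivity (1 - (sin u ^ 2 + cos u ^ 2) / sin u ^ 2 * (1 - cos u ^ 2 / 3) + 2/3 * cos u ^ 2).
  { field. auto. }
  rewrite Hid.
  assert (Hs : sin u ^ 2 = 1 - cos u ^ 2) by lra. rewrite Hs.
  field. rewrite <- Hs. apply pow_nonzero. auto.
Qed.

Lemma incr_strict (f df : R -> R) a b : a < b ->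
  (forall x, a <= x <= b -> is_derive f x (df x)) ->
  (forall x, a <= x <= b -> 0 <= df x) ->
  (forall x, a < x < b -> 0 < df x) -> f a < f b.
Proof.
  intros Hab Hd H0 H1.
  assert (Hc : forall x, a <= x <= b -> continuity_pt f x).
  { intros x Hx. apply continuity_pt_filterlim. apply (ex_derive_continuous f).
    exists (df x). auto. }
  assert (Piece : forall p q, a <= p -> p < q -> q <= b ->
            exists c, p <= c <= q /\ f q - f p = df c * (q - p)).
  { intros p q Hp Hpq Hq.
    destruct (MVT_gen f p q df) as [c [Hc1 Hc2]].
    - intros x Hx. rewrite Rmin_left in Hx by lra. rewrite Rmax_right in Hx by lra. apply Hd; lra.
    - intros x Hx. rewrite Rmin_left in Hx by lra. rewrite Rmax_right in Hx by lra. apply Hc; lra.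
    - rewrite Rmin_left in Hc1 by lra. rewrite Rmax_right in Hc1 by lra. exists c; auto. }
  set (m1 := a + (b - a) / 3). set (m2 := a + 2 * (b - a) / 3).
  destruct (Piece a m1) as [c1 [Hc1 E1]]; try (unfold m1; lra).
  destruct (Piece m1 m2) as [c2 [Hc2 E2]]; try (unfold m1, m2; lra).
  destruct (Piece m2 b) as [c3 [Hc3 E3]]; try (unfold m2; lra).
  assert (0 <= df c1) by (apply H0; unfold m1 in *; lra).
  assert (0 < df c2) by (apply H1; unfold m1, m2 in *; lra).
  assert (0 <= df c3) by (apply H0; unfold m2 in *; lra).
  assert (0 < m1 - a) by (unfold m1; lra).
  assert (0 < m2 - m1) by (unfold m1, m2; lra).
  assert (0 < b - m2) by (unfold m2; lra).
  nra.
Qed.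

Lemma T_decr t1 t2 : 0 < t1 -> t1 < t2 -> t2 <= PI / 2 -> theta_lhs t2 < theta_lhs t1.
Proof.
  intros H1 H12 H2.
  assert (Hs : forall x, t1 <= x <= t2 -> 0 < sin x).
  { intros x Hx. apply sin_gt_0; pose proof PI_RGT_0; lra. }
  assert (Hinc : (fun x => - theta_lhs x) t1 < (fun x => - theta_lhs x) t2).
  { apply (incr_strict (fun x => - theta_lhs x) (fun x => (2/3) * cos x ^ 4 / sin x ^ 2)).
    - auto.
    - intros x Hx. assert (sin x <> 0) by (specialize (Hs x Hx); lra).
      replace ((2/3) * cos x ^ 4 / sin x ^ 2) with (- (- (2/3) * cos x ^ 4 / sin x ^ 2)) by (field; auto).
      apply (is_derive_opp theta_lhs). apply dT; auto.
    - intros x Hx. specialize (Hs x Hx). apply Rmult_le_pos.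
      + assert (0 <= cos x ^ 4) by (replace (cos x ^ 4) with ((cos x ^ 2) ^ 2) by ring; apply pow2_ge_0). lra.
      + apply Rlt_le, Rinv_0_lt_compat. apply pow_lt; auto.
    - intros x Hx. assert (Hsx : 0 < sin x) by (apply Hs; lra).
      assert (Hc : 0 < cos x) by (apply cos_gt_0; lra).
      apply Rmult_lt_0_compat.
      + assert (0 < cos x ^ 4) by (apply pow_lt; auto). lra.
      + apply Rinv_0_lt_compat. apply pow_lt; auto. }
  simpl in Hinc. lra.
Qed.

Lemma M_u rho alpha u : 0 < rho < 1 -> 0 <= u <= PI/2 ->
  M (2 * sin u) rho rho alpha = rho * (2 - rho) + (1 - rho) * Fm rho alpha u.
Proof.
  intros Hr Hu.
  assert (0 <= sin u) by (apply sin_ge_0; lra).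
  pose proof (SIN_bound u).
  rewrite M_formula by (auto; lra).
  rewrite Q0_u, Q1_u, Q2_u by auto. unfold Fm, Ij. ring.
Qed.

Lemma h_sign rho alpha R0 x : 0 < rho < 1 -> 0 < alpha ->
  R0 = PI * (1 + / alpha * rho - rho) / (2 * (1 - rho)) ->
  0 < x <= PI/2 ->
  hfun rho alpha x = 4 * alpha * (1 - rho) / PI * sin x * (R0 - theta_lhs x).
Proof.
  intros Hr Ha HR Hx.
  assert (Hs : 0 < sin x) by (apply sin_gt_0; lra).
  rewrite h_K, K_T by lra. subst R0. pose proof PI_RGT_0. field. repeat split; lra.
Qed.

Lemma h0 rho alpha : 0 < rho < 1 -> 0 < alpha -> hfun rho alpha 0 < 0.
Proof.
  intros Hr Ha. rewrite h_K. unfold Kf. rewrite sin_0, cos_0.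
  pose proof PI_RGT_0.
  assert (0 < 4 * alpha * (1 - rho) / PI).
  { apply Rdiv_lt_0_compat; [|lra]. apply Rmult_lt_0_compat; [lra|lra]. }
  nra.
Qed.

Lemma F_min rho alpha R0 th u : 0 < rho < 1 -> 0 < alpha ->
  R0 = PI * (1 + / alpha * rho - rho) / (2 * (1 - rho)) ->
  0 < th < PI/2 -> theta_lhs th = R0 ->
  0 <= u <= PI/2 -> u <> th -> Fm rho alpha th < Fm rho alpha u.
Proof.
  intros Hr Ha HR Hth HT Hu Hne.
  pose proof PI_RGT_0.
  assert (Hcoef : 0 < 4 * alpha * (1 - rho) / PI).
  { apply Rdiv_lt_0_compat; [|lra]. apply Rmult_lt_0_compat; [lra|lra]. }
  destruct (Rlt_or_le th u) as [Hlt|Hle].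
  - apply (incr_strict (Fm rho alpha) (fun x => 4 * cos x * hfun rho alpha x)); auto.
    + intros x _. apply dFm.
    + intros x Hx. assert (0 <= cos x) by (apply cos_ge_0; lra).
      rewrite (h_sign rho alpha R0) by (auto; lra).
      assert (0 < sin x) by (apply sin_gt_0; lra).
      assert (theta_lhs x <= R0).
      { destruct (Rle_lt_or_eq_dec th x) as [h|h]; [lra| |].
        - left. rewrite <- HT. apply T_decr; lra.
        - subst x. lra. }
      assert (0 <= 4 * alpha * (1 - rho) / PI * sin x * (R0 - theta_lhs x)).
      { apply Rmult_le_pos; [|lra]. apply Rmult_le_pos; lra. }
      apply Rmult_le_pos; lra.
    + intros x Hx. assert (0 < cos x) by (apply cos_gt_0; lra).
      rewrite (h_sign rho alpha R0) by (auto; lra).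
      assert (0 < sin x) by (apply sin_gt_0; lra).
      assert (theta_lhs x < R0) by (rewrite <- HT; apply T_decr; lra).
      assert (0 < 4 * alpha * (1 - rho) / PI * sin x * (R0 - theta_lhs x)).
      { apply Rmult_lt_0_compat; [|lra]. apply Rmult_lt_0_compat; lra. }
      apply Rmult_lt_0_compat; lra.
  - assert (Hlt : u < th) by lra.
    assert (HH : (fun x => - Fm rho alpha x) u < (fun x => - Fm rho alpha x) th).
    { apply (incr_strict (fun x => - Fm rho alpha x) (fun x => - (4 * cos x * hfun rho alpha x))); auto.
      + intros x _. apply (is_derive_opp (Fm rho alpha)). apply dFm.
      + intros x Hx. assert (0 <= cos x) by (apply cos_ge_0; lra).
        assert (hfun rho alpha x <= 0).
        { destruct (Rle_lt_or_eq_dec 0 x) as [h|h]; [lra| |].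
          - rewrite (h_sign rho alpha R0) by (auto; lra).
            assert (0 < sin x) by (apply sin_gt_0; lra).
            assert (R0 <= theta_lhs x).
            { destruct (Rle_lt_or_eq_dec x th) as [h'|h']; [lra| |].
              - left. rewrite <- HT. apply T_decr; lra.
              - subst x. lra. }
            assert (0 <= 4 * alpha * (1 - rho) / PI * sin x * (theta_lhs x - R0)).
            { apply Rmult_le_pos; [|lra]. apply Rmult_le_pos; lra. }
            nra.
          - subst x. pose proof (h0 rho alpha Hr Ha). lra. }
        nra.
      + intros x Hx. assert (0 < cos x) by (apply cos_gt_0; lra).
        rewrite (h_sign rho alpha R0) by (auto; lra).
        assert (0 < sin x) by (apply sin_gt_0; lra).
        assert (R0 < theta_lhs x) by (rewrite <- HT; apply T_decr; lra).
        assert (0 < 4 * alpha * (1 - rho) / PI * sin x * (theta_lhs x - R0)).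
        { apply Rmult_lt_0_compat; [|lra]. apply Rmult_lt_0_compat; lra. }
        nra. }
    simpl in HH. lra.
Qed.

Theorem theorem5 (rho alpha : R) (hrho : 0 < rho < 1) (halpha : alpha = 1 / 2 \/ alpha = 1) :
  (forall L : R, 0 <= L <= 2 ->
     M L rho rho alpha =
     rho * (2 - rho) + (1 - rho) * (rho * L ^ 2 +
        alpha * (1 - rho) * (Q2 L - 2 * L * Q1 L + L ^ 2 * Q0 L))) /\
  (forall x : R, 0 <= x < 2 ->
     Q0 x = 1 - x / (2 * PI) * sqrt (4 - x ^ 2) - 2 / PI * atan (x / sqrt (4 - x ^ 2))) /\
  (forall x : R, 0 <= x <= 2 ->
     Q1 x = / (3 * PI) * ((4 - x ^ 2) * sqrt (4 - x ^ 2))) /\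
  (forall x : R, 0 <= x <= 2 ->
     Q2 x = 1 - / (4 * PI) * x * sqrt (4 - x ^ 2) * (x ^ 2 - 2) - 2 / PI * asin (x / 2)) /\
  (forall t1 t2 : R, 0 < t1 -> t1 < t2 -> t2 <= PI / 2 -> theta_lhs t2 < theta_lhs t1) /\
  (exists th : R,
     (0 < th <= PI / 2 /\
      theta_lhs th = PI * (1 + / alpha * rho - rho) / (2 * (1 - rho))) /\
     (forall th' : R, 0 < th' <= PI / 2 ->
        theta_lhs th' = PI * (1 + / alpha * rho - rho) / (2 * (1 - rho)) -> th' = th) /\
     (forall L : R, 0 <= L ->
        M (2 * sin th) rho rho alpha <= M L rho rho alpha /\
        (M L rho rho alpha = M (2 * sin th) rho rho alpha -> L = 2 * sin th))).
Proof.
  assert (Ha : 0 < alpha) by (destruct halpha; lra).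
  split; [intros; apply M_formula; auto|].
  split; [exact Q0_closed|].
  split; [exact Q1_closed|].
  split; [exact Q2_closed|].
  split; [exact T_decr|].
  set (R0 := PI * (1 + / alpha * rho - rho) / (2 * (1 - rho))).
  pose proof PI_RGT_0 as Hpi.
  assert (HR0 : PI / 2 < R0).
  { unfold R0. apply Rminus_gt_0_lt.
    replace (PI * (1 + / alpha * rho - rho) / (2 * (1 - rho)) - PI / 2)
      with (PI * rho / (2 * alpha * (1 - rho))) by (field; split; lra).
    apply Rdiv_lt_0_compat. nra. apply Rmult_lt_0_compat; lra. }
  assert (Hcont : continuity (fun u => - (Kf u - R0 * sin u))).
  { intros x. apply continuity_pt_filterlim.
    apply (ex_derive_continuous (fun u => - (Kf u - R0 * sin u))). unfold Kf. auto_derive. auto. }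
  destruct (IVT _ 0 (PI/2) Hcont) as [z [Hz Hkz]].
  - lra.
  - unfold Kf. rewrite sin_0, cos_0. lra.
  - unfold Kf. rewrite sin_PI2, cos_PI2. lra.
  - assert (Hz0 : z <> 0).
    { intros ->. unfold Kf in Hkz. rewrite sin_0, cos_0 in Hkz. lra. }
    assert (Hz1 : z <> PI/2).
    { intros ->. unfold Kf in Hkz. rewrite sin_PI2, cos_PI2 in Hkz. lra. }
    assert (Hzr : 0 < z < PI/2) by lra.
    assert (Hsz : 0 < sin z) by (apply sin_gt_0; lra).
    assert (HTz : theta_lhs z = R0).
    { rewrite K_T in Hkz by lra. apply Rmult_eq_reg_l with (sin z); lra. }
    exists z. split; [split; [lra | exact HTz]|]. split.
    + intros th' Hth' HT'.
      destruct (Rtotal_order th' z) as [h|[h|h]]; auto.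
      * pose proof (T_decr th' z ltac:(lra) h ltac:(lra)). lra.
      * pose proof (T_decr z th' ltac:(lra) h ltac:(lra)). lra.
    + assert (Key : forall u, 0 <= u <= PI/2 -> u <> z ->
               M (2 * sin z) rho rho alpha < M (2 * sin u) rho rho alpha).
      { intros u Hu Hne. rewrite !M_u by (auto; lra).
        pose proof (F_min rho alpha R0 z u hrho Ha eq_refl Hzr HTz Hu Hne). nra. }
      intros L HL.
      destruct (Rle_or_lt L 2) as [HL2|HL2].
      * destruct (asin_half L (conj HL HL2)) as [Hu [Hs _]].
        rewrite <- Hs.
        destruct (Req_dec (asin (L / 2)) z) as [E|E].
        -- rewrite E. split; [lra|auto].
        -- pose proof (Key _ Hu E). split; [lra|intros; lra].
      * assert (H2 : M (2 * sin z) rho rho alpha < M 2 rho rho alpha).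
        { assert (E2 : 2 * sin (PI/2) = 2) by (rewrite sin_PI2; ring).
          pose proof (Key (PI/2) ltac:(lra) ltac:(lra)) as K2. rewrite E2 in K2. exact K2. }
        rewrite (M_big rho alpha 2) in H2 by (auto; lra).
        rewrite (M_big rho alpha L) by (auto; lra).
        assert (4 < L ^ 2) by nra. assert (rho * 2 ^ 2 < rho * L ^ 2) by (apply Rmult_lt_compat_l; lra).
        assert (0 < 1 - rho) by lra.
        split; [nra | intros; nra].
Qed.
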